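(* Let $\mathbf v\in\mathbb{R}^\infty$, and let $\mathbf y=\mathbb{F}^{\rm S}\mathbf v$ and $\mathbf z=\mathbb{L}^{\rm S}\mathbf v$, where $\mathbb{F}^{\rm S}=(1,x(1+x))$ and $\mathbb{L}^{\rm S}=(1+2x,x(1+x))$. Let $D=(1,-x)=\mathrm{diag}(1,-1,1,\ldots)$ and $C(x)=\frac{1-\sqrt{1-4x}}{2x}$. Then: (a) $\left(\frac{1}{1+2xC(x)},xC(x)\right)\mathbf z=D(\mathbb{F}^{\rm S})^{-1}D\,\mathbf y$; (b) $\left(\frac{1}{1-4x^2C(x)^2},xC(x)\right)\mathbf z=D(\mathbb{L}^{\rm S})^{-1}D\,\mathbf y$; (c) $\left(1+2xC(x),xC(x)\right)\mathbf y=D(\mathbb{F}^{\rm S})^{-1}D\,\mathbf z$; (d) $\left(\frac{1+2xC(x)}{1-2xC(x)},xC(x)\right)\mathbf y=D(\mathbb{L}^{\rm S})^{-1}D\,\mathbf z$.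
   Context: $\mathbb{R}^\infty$ is the space of real column vectors $[v_0,v_1,\ldots]^T$, identified with generating functions. For formal power series $g(x)$ with $g(0)\neq 0$ and $f(x)$ with $f(0)=0$, $f'(0)\ne0$, $(g(x),f(x))$ denotes the (Riordan) infinite lower triangular matrix whose $j$-th column has generating function $g(x)f(x)^j$; it maps a vector with generating function $U(x)$ to one with generating function $g(x)U(f(x))$. These matrices form a group with $(g,f)(h,l)=(g\cdot h(f),l(f))$ and $(g,f)^{-1}=(1/g(\bar f),\bar f)$, $\bar f$ the compositional inverse of $f$. *)

(* Defs.v *)
(* Formal power series over a real field R are represented
   by their coefficient sequences  nat -> R  (= column vectors of R^infty). *)
From Stdlib Require Import ClassicalEpsilon.
From mathcomp Require Import all_boot all_order all_algebra.
From mathcomp Require Import reals.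
Set Implicit Arguments. Unset Strict Implicit. Unset Printing Implicit Defensive.
Import Order.TTheory GRing.Theory Num.Theory.
Local Open Scope ring_scope.

Section FPS.
Variable R : realType.

Definition fps := nat -> R.

Definition fadd (f g : fps) : fps := fun n => f n + g n.
Definition fopp (f : fps) : fps := fun n => - f n.
Definition fscale (c : R) (f : fps) : fps := fun n => c * f n.
Definition fmul (f g : fps) : fps := fun n => \sum_(k < n.+1) f k * g (n - k)%N.
Definition fone : fps := fun n => (n == 0%N)%:R.
Definition fX : fps := fun n => (n == 1%N)%:R.
Definition fexp (f : fps) (k : nat) : fps := iter k (fmul f) fone.
(* composition v(f(x)), meaningful for f(0) = 0 *)
Definition fcomp (v f : fps) : fps := fun n => \sum_(k < n.+1) v k * fexp f k n.
(* division by x of a series with zero constant term *)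
Definition fdivX (f : fps) : fps := fun n => f n.+1.

(* multiplicative inverse 1/g (for g(0) <> 0), the unique h with g h = 1 *)
Definition fpinv (g : fps) : fps :=
  epsilon (inhabits fone) (fun h => fmul g h = fone).
(* compositional inverse fbar (for f(0)=0, f'(0)<>0): the unique h with
   h(0) = 0 and f(h(x)) = x *)
Definition frev (f : fps) : fps :=
  epsilon (inhabits fone) (fun h => h 0%N = 0 /\ fcomp f h = fX).
(* square root with constant term 1 (for p(0) = 1) *)
Definition fsqrt (p : fps) : fps :=
  epsilon (inhabits fone) (fun h => h 0%N = 1 /\ fmul h h = p).

(* Riordan arrays (g, f) as pairs; action on vectors: U |-> g * U(f) *)
Definition riordan := (fps * fps)%type.
Definition rarr (g f : fps) : riordan := (g, f).
Definition rapp (A : riordan) (v : fps) : fps := fmul A.1 (fcomp v A.2).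
Definition rinv (A : riordan) : riordan :=
  (fpinv (fcomp A.1 (frev A.2)), frev A.2).

(* D = (1, -x) = diag(1,-1,1,...) *)
Definition Dmat : riordan := (fone, fopp fX).
Definition FS : riordan := (fone, fmul fX (fadd fone fX)).
Definition LS : riordan := (fadd fone (fscale 2 fX), fmul fX (fadd fone fX)).
(* C(x) = (1 - sqrt(1-4x)) / (2x) *)
Definition Ccat : fps :=
  fscale (1/2) (fdivX (fadd fone (fopp (fsqrt (fadd fone (fscale (-4) fX)))))).
Definition xC : fps := fmul fX Ccat.

End FPS.

(* Main.v *)
Require Import Defs.
From Stdlib Require Import ClassicalEpsilon FunctionalExtensionality Ring.
From mathcomp Require Import all_boot all_order all_algebra.
From mathcomp Require Import reals.
From mathcomp Require Import zify.
Set Implicit Arguments. Unset Strict Implicit. Unset Printing Implicit Defensive.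
Import Order.TTheory GRing.Theory Num.Theory.
Local Open Scope ring_scope.

Section Aux.
Variable R : realType.
Implicit Types (a b f g h v w : fps R) (p q : {poly R}).

Definition agree (N : nat) a p := forall n, (n <= N)%N -> a n = p`_n.

Definition tr N a : {poly R} := \poly_(i < N.+1) a i.

Lemma agree_tr N a : agree N a (tr N a).
Proof. by move=> n hn; rewrite coef_poly ltnS hn. Qed.

Lemma agree_add N a b p q : agree N a p -> agree N b q -> agree N (fadd a b) (p + q).
Proof. by move=> ha hb n hn; rewrite coefD /fadd ha ?hb. Qed.

Lemma agree_opp N a p : agree N a p -> agree N (fopp a) (- p).
Proof. by move=> ha n hn; rewrite coefN /fopp ha. Qed.

Lemma agree_scale N c a p : agree N a p -> agree N (fscale c a) (c *: p).
Proof. by move=> ha n hn; rewrite coefZ /fscale ha. Qed.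

Lemma agree_one N : agree N (fone R) 1.
Proof. by move=> n _; rewrite coef1 /fone. Qed.

Lemma agree_X N : agree N (fX R) 'X.
Proof. by move=> n _; rewrite coefX /fX. Qed.

Lemma agree_mul N a b p q : agree N a p -> agree N b q -> agree N (fmul a b) (p * q).
Proof.
move=> ha hb n hn; rewrite coefM /fmul; apply: eq_bigr => k _.
have hk := ltn_ord k.
rewrite (ha k) ?(hb (n - k)%N) //; lia.
Qed.

Lemma fexpS f k : fexp f k.+1 = fmul f (fexp f k).
Proof. by rewrite /fexp iterS. Qed.

Lemma fexp0 f : fexp f 0 = fone R.
Proof. by []. Qed.

Lemma agree_exp N f p k : agree N f p -> agree N (fexp f k) (p ^+ k).
Proof.
move=> hf; elim: k => [|k IH]; first by rewrite fexp0 expr0; exact: agree_one.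
by rewrite fexpS exprS; apply: agree_mul.
Qed.

Lemma fexp_low f k n : f 0%N = 0 -> (n < k)%N -> fexp f k n = 0.
Proof.
move=> f0; elim: k n => [//|k IH] n hn.
rewrite fexpS /fmul big1 // => j _.
case: (posnP j) => [->|jp]; first by rewrite f0 mul0r.
rewrite IH ?mulr0 //; have := ltn_ord j; lia.
Qed.

Lemma agree_comp N v f p q : agree N v p -> agree N f q -> f 0%N = 0 ->
  agree N (fcomp v f) (p \Po q).
Proof.
move=> hv hf f0 n hn; rewrite coef_comp_poly /fcomp.
pose M := maxn (size p) n.+1.
have e1 : \sum_(k < n.+1) v k * fexp f k n = \sum_(k < M) p`_k * (q ^+ k)`_n.
  rewrite (big_ord_widen M (fun k => v k * fexp f k n)) ?leq_maxr //.
  rewrite big_mkcond /=; apply: eq_bigr => k _.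
  case: ifP => hk.
    rewrite (hv k) ?(agree_exp k hf hn) //. move: hk; rewrite ltnS => hk. exact: leq_trans hk hn.
  rewrite -(agree_exp k hf hn) fexp_low ?mulr0 //. by move/negbT: hk; rewrite -leqNgt.
rewrite e1 (@big_ord_widen _ _ _ (size p) M (fun k => p`_k * (q ^+ k)`_n)) ?leq_maxl //.
rewrite [RHS]big_mkcond /=; apply: eq_bigr => k _.
case: ifP => hk //.
by rewrite nth_default ?mul0r // leqNgt hk.
Qed.


Lemma agree_eq N a p p' : agree N a p -> p = p' -> agree N a p'.
Proof. by move=> h <-. Qed.

Lemma fps_ext a b : (forall N, exists p q, [/\ agree N a p, agree N b q & p = q]) -> a = b.
Proof.
move=> H; apply: functional_extensionality => n.
have [p [q [h1 h2 e]]] := H n. by rewrite (h1 n) ?(h2 n) ?e.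
Qed.

Ltac ag := repeat first [apply: agree_add | apply: agree_opp | apply: agree_scale
  | apply: agree_mul | apply: agree_comp | apply: agree_one | apply: agree_X | apply: agree_tr].

Ltac ext := apply: fps_ext => N; do 2 eexists; split; [ag | ag | ].

Definition fzero : fps R := fun _ => 0.
Definition fsub a b := fadd a (fopp b).

Lemma fmulC a b : fmul a b = fmul b a.
Proof. by ext; rewrite mulrC. Qed.
Lemma fmulA a b c : fmul a (fmul b c) = fmul (fmul a b) c.
Proof. by ext; rewrite mulrA. Qed.
Lemma fmul1 a : fmul (fone R) a = a.
Proof. by ext; rewrite mul1r. Qed.
Lemma fmulDl a b c : fmul (fadd a b) c = fadd (fmul a c) (fmul b c).
Proof. by ext; rewrite mulrDl. Qed.
Lemma fadd0 a : fadd fzero a = a.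
Proof. by apply: functional_extensionality => n; rewrite /fadd /fzero add0r. Qed.
Lemma faddC a b : fadd a b = fadd b a.
Proof. by apply: functional_extensionality => n; rewrite /fadd addrC. Qed.
Lemma faddA a b c : fadd a (fadd b c) = fadd (fadd a b) c.
Proof. by apply: functional_extensionality => n; rewrite /fadd addrA. Qed.
Lemma faddN a : fadd a (fopp a) = fzero.
Proof. by apply: functional_extensionality => n; rewrite /fadd /fopp /fzero subrr. Qed.

Definition fps_rt : ring_theory fzero (fone R) (@fadd R) (@fmul R) fsub (@fopp R) eq.
Proof.
constructor => //.
- exact: fadd0. - exact: faddC. - exact: faddA. - exact: fmul1. - exact: fmulC.
- exact: fmulA. - exact: fmulDl. - exact: faddN.
Qed.

Add Ring fpsRing : fps_rt.

Lemma fmul0 a b : fmul a b 0%N = a 0%N * b 0%N.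
Proof. by rewrite /fmul big_ord1. Qed.
Lemma fcomp0 a f : fcomp a f 0%N = a 0%N.
Proof. by rewrite /fcomp big_ord1 fexp0 /fone mulr1. Qed.

Section Comp.
Variable f : fps R.
Hypothesis f0 : f 0%N = 0.

Lemma fcompD a b : fcomp (fadd a b) f = fadd (fcomp a f) (fcomp b f).
Proof. by ext => //; rewrite comp_polyD. Qed.
Lemma fcompN a : fcomp (fopp a) f = fopp (fcomp a f).
Proof. by ext => //; rewrite raddfN. Qed.
Lemma fcompZ c a : fcomp (fscale c a) f = fscale c (fcomp a f).
Proof. by ext => //; rewrite comp_polyZ. Qed.
Lemma fcompM a b : fcomp (fmul a b) f = fmul (fcomp a f) (fcomp b f).
Proof. by ext => //; rewrite comp_polyM. Qed.
Lemma fcomp1 : fcomp (fone R) f = fone R.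
Proof. by ext => //; rewrite (comp_poly_multiplicative _).2. Qed.
Lemma fcompX : fcomp (fX R) f = f.
Proof. by ext => //; rewrite comp_polyX. Qed.
Lemma fcompA a g : g 0%N = 0 -> fcomp (fcomp a f) g = fcomp a (fcomp f g).
Proof. by move=> g0; ext => //; rewrite ?fcomp0 // comp_polyA. Qed.
End Comp.

Lemma rec_exists (F : nat -> fps R -> R) :
  (forall n a b, (forall k, (k < n)%N -> a k = b k) -> F n a = F n b) ->
  exists a, forall n, a n = F n a.
Proof.
move=> HF.
pose A m := iter m (fun a n => F n a) fzero.
have st : forall k m, (k < m)%N -> A m k = A k.+1 k.
  elim/ltn_ind => k IH [//|m] km.
  rewrite /A !iterS /= -/(A m) -/(A k); apply: HF => j jk.
  rewrite (IH j jk m) ?(IH j jk k) //; lia.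
exists (fun n => A n.+1 n) => n.
rewrite /A iterS /= -/(A n); apply: HF => k kn; exact: st.
Qed.

Lemma inv_exists g : g 0%N != 0 -> exists h, fmul g h = fone R.
Proof.
move=> g0.
pose F n (a : fps R) := if n is m.+1 then - (g 0%N)^-1 * \sum_(k < m.+1) g k.+1 * a (m - k)%N
  else (g 0%N)^-1.
have [h hh] : exists h, forall n, h n = F n h.
  apply: rec_exists => [[|m]] a b H //=; congr (_ * _); apply: eq_bigr => k _.
  rewrite H //; have := ltn_ord k; lia.
exists h; apply: functional_extensionality => [[|m]].
  by rewrite fmul0 hh /= divff.
rewrite /fmul big_ord_recl /= subn0 hh /= mulrA mulrN divff // mulN1r.
rewrite /fone /=; apply/eqP; rewrite addrC subr_eq0; apply/eqP.
by apply: eq_bigr => k _; rewrite /bump /= add1n subSS.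
Qed.

Lemma fpinvP g : g 0%N != 0 -> fmul g (fpinv g) = fone R.
Proof.
move=> /inv_exists [h hh]; rewrite /fpinv.
exact: (epsilon_spec (inhabits (fone R)) (fun h => fmul g h = fone R) (ex_intro _ h hh)).
Qed.

Lemma fpinv_uniq g h : g 0%N != 0 -> fmul g h = fone R -> fpinv g = h.
Proof.
move=> g0 gh.
have e : fpinv g = fmul (fpinv g) (fmul g h) by rewrite gh fmulC fmul1.
by rewrite e fmulA (fmulC _ g) fpinvP // fmul1.
Qed.


Definition fC c : fps R := fscale c (fone R).
Lemma fscaleE c a : fscale c a = fmul (fC c) a.
Proof. by ext; rewrite -mul_polyC -alg_polyC /fC -[_%:A]/(c *: 1). Qed.
Lemma fCD c d : fC (c + d) = fadd (fC c) (fC d).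
Proof. by apply: functional_extensionality => n; rewrite /fC /fadd /fscale mulrDl. Qed.
Lemma fCN c : fC (- c) = fopp (fC c).
Proof. by apply: functional_extensionality => n; rewrite /fC /fopp /fscale mulNr. Qed.
Lemma fC1 : fC 1 = fone R.
Proof. by apply: functional_extensionality => n; rewrite /fC /fscale mul1r. Qed.
Lemma fC2 : fC 2 = fadd (fone R) (fone R).
Proof. by rewrite -fC1 -fCD. Qed.
Lemma fC4 : fC 4 = fadd (fone R) (fadd (fone R) (fadd (fone R) (fone R))).
Proof. rewrite -fC1 -!fCD; congr fC; by rewrite -[4%N]/(1+(1+(1+1)))%N !natrD. Qed.
Lemma fChalf : fadd (fC (1/2)) (fC (1/2)) = fone R.
Proof. by rewrite -fCD -splitr fC1. Qed.

Lemma cancel4 w : fadd w (fadd w (fadd w w)) = fzero -> w = fzero.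
Proof.
move=> h; apply: functional_extensionality => n.
have := congr1 (fun f => f n) h; rewrite /fadd /fzero => e.
have : w n * 4 = 0 by rewrite -e; rewrite -[4%N]/(1+(1+(1+1)))%N !natrD !mulrDr mulr1.
by move/eqP; rewrite mulf_eq0 pnatr_eq0 orbF => /eqP.
Qed.

Lemma fdivXK w : w 0%N = 0 -> fmul (fX R) (fdivX w) = w.
Proof.
move=> w0; apply: functional_extensionality => [[|m]].
  by rewrite fmul0 /fX /= mul0r w0.
rewrite /fmul big_ord_recl big_ord_recl big1 /=.
  by rewrite /fX /= mul0r add0r mul1r addr0 /fdivX subn1.
by move=> i _; rewrite /fX /= mul0r.
Qed.

Lemma u_exists : exists u : fps R, u 0%N = 0 /\ fmul u u = fsub u (fX R).
Proof.
pose F n (a : fps R) := (n == 1%N)%:R +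
  \sum_(k < n.+1) (if (0 < k < n)%N then a k * a (n - k)%N else 0).
have [u hu] : exists u, forall n, u n = F n u.
  apply: rec_exists => n a b H; congr (_ + _); apply: eq_bigr => k _.
  case: ifP => // /andP[k0 kn]; rewrite !H //; lia.
have u0 : u 0%N = 0 by rewrite hu /F big_ord1 /= addr0.
exists u; split => //.
apply: functional_extensionality => n.
rewrite /fsub /fadd /fopp /fX hu /F addrC addrA addNr add0r /fmul.
apply: eq_bigr => k _; case: ifP => // /negbT.
have := ltn_ord k; rewrite negb_and -!leqNgt ltnS => kn /orP[|nk].
  by rewrite leqn0 => /eqP ->; rewrite u0 mul0r.
have -> : (n - k)%N = 0%N by lia. by rewrite u0 mulr0.
Qed.


Definition PP : fps R := fmul (fX R) (fadd (fone R) (fX R)).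
Definition NN : fps R := fopp (fX R).
Lemma X0 : fX R 0%N = 0. Proof. by []. Qed.
Lemma NN0 : NN 0%N = 0. Proof. by rewrite /NN /fopp X0 oppr0. Qed.
Lemma PP0 : PP 0%N = 0. Proof. by rewrite /PP fmul0 X0 mul0r. Qed.
Lemma foppK a : fopp (fopp a) = a.
Proof. by apply: functional_extensionality => n; rewrite /fopp opprK. Qed.

Lemma frevP : frev PP 0%N = 0 /\ fcomp PP (frev PP) = fX R.
Proof.
have [u [u0 hu]] := u_exists.
pose w := fcomp u NN.
have hw : fmul w w = fsub w NN.
  by rewrite /w -fcompM ?NN0 // hu /fsub fcompD ?NN0 // fcompN ?NN0 // fcompX ?NN0.
apply: (epsilon_spec (inhabits (fone R)) (fun h => h 0%N = 0 /\ fcomp PP h = fX R)).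
exists (fopp w); split; first by rewrite /fopp /w fcomp0 u0 oppr0.
have w0 : fopp w 0%N = 0 by rewrite /fopp /w fcomp0 u0 oppr0.
rewrite /PP fcompM // fcompD // fcomp1 // fcompX //.
move: hw; rewrite /NN => hw. ring [hw].
Qed.

Lemma fsqrtP : fsqrt (fadd (fone R) (fscale (-4) (fX R))) 0%N = 1 /\
  fmul (fsqrt (fadd (fone R) (fscale (-4) (fX R)))) (fsqrt (fadd (fone R) (fscale (-4) (fX R))))
   = fadd (fone R) (fscale (-4) (fX R)).
Proof.
have [u [u0 hu]] := u_exists.
apply: (epsilon_spec (inhabits (fone R)) (fun h => h 0%N = 1 /\ fmul h h = _)).
exists (fsub (fone R) (fadd u u)); split.
  by rewrite /fsub /fadd /fopp u0 addr0 oppr0 addr0.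
rewrite fscaleE fCN fC4. ring [hu].
Qed.

Lemma xCP : xC R 0%N = 0 /\ fmul (xC R) (xC R) = fsub (xC R) (fX R).
Proof.
have [s0 hs] := fsqrtP.
set s := fsqrt _ in s0 hs.
have d0 : fadd (fone R) (fopp s) 0%N = 0 by rewrite /fadd /fopp s0 subrr.
have hc : xC R = fmul (fC (1/2)) (fsub (fone R) s).
  rewrite /xC /Ccat -/s fscaleE.
  transitivity (fmul (fC (1/2)) (fmul (fX R) (fdivX (fadd (fone R) (fopp s))))); first by ring.
  by rewrite fdivXK.
split; first by rewrite hc fmul0 /fsub /fadd /fopp s0 subrr mulr0.
set c := xC R in hc *.
have e : fadd c c = fsub (fone R) s.
  by rewrite hc -[in RHS](fmul1 (fsub _ s)) -fChalf; ring.
have hs2 : s = fsub (fone R) (fadd c c) by rewrite e; ring.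
move: hs; rewrite hs2 fscaleE fCN fC4 => hs.
have h4 : fadd (fsub (fmul c c) (fsub c (fX R))) (fadd (fsub (fmul c c) (fsub c (fX R)))
  (fadd (fsub (fmul c c) (fsub c (fX R))) (fsub (fmul c c) (fsub c (fX R))))) = fzero.
  transitivity (fsub (fmul (fsub (fone R) (fadd c c)) (fsub (fone R) (fadd c c)))
    (fadd (fone R) (fmul (fopp (fadd (fone R) (fadd (fone R) (fadd (fone R) (fone R))))) (fX R)))).
    ring.
  rewrite hs; ring.
have := cancel4 h4 => h0.
transitivity (fadd (fsub (fmul c c) (fsub c (fX R))) (fsub c (fX R))); first by ring.
rewrite h0; ring.
Qed.


Lemma key : frev PP 0%N = 0 /\ fmul (frev PP) (fadd (fone R) (frev PP)) = fX R /\
  fcomp (frev PP) NN = fopp (xC R).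
Proof.
have [t0 ht] := frevP. set t := frev PP in t0 ht *.
have [c0 hc] := xCP. set c := xC R in c0 hc *.
move: ht; rewrite /PP fcompM // fcompX // fcompD // fcomp1 // fcompX // => ht.
do 2 split => //.
have := congr1 (fun a => fcomp a NN) ht.
rewrite /= fcompM ?NN0 // fcompD ?NN0 // fcomp1 ?NN0 // fcompX ?NN0 // => hr.
set r := fcomp t NN in hr *.
have r0 : r 0%N = 0 by rewrite /r fcomp0.
have hr' : fmul r r = fsub NN r.
  transitivity (fsub (fmul r (fadd (fone R) r)) r); first by ring.
  by rewrite hr.
move: hr'; rewrite /NN => hr'.
have hw : fmul (fopp r) (fopp r) = fsub (fopp r) (fX R) by ring [hr'].
set w := fopp r in hw.
have w0 : w 0%N = 0 by rewrite /w /fopp r0 oppr0.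
have E : fmul (fsub c w) (fsub (fadd c w) (fone R)) = fzero by ring [hc hw].
have q0 : fsub (fadd c w) (fone R) 0%N != 0.
  by rewrite /fsub /fadd /fopp c0 w0 !add0r /fone /= oppr_eq0 oner_eq0.
have hk := fpinvP q0.
have D : fsub c w = fzero.
  transitivity (fmul (fsub c w) (fmul (fsub (fadd c w) (fone R)) (fpinv (fsub (fadd c w) (fone R))))).
    by rewrite hk; ring.
  transitivity (fmul (fmul (fsub c w) (fsub (fadd c w) (fone R))) (fpinv (fsub (fadd c w) (fone R)))).
    by ring.
  by rewrite E; ring.
transitivity (fsub (fsub c w) c); first by rewrite /w; ring.
by rewrite D; ring.
Qed.

Lemma fcomp_inv g f : g 0%N != 0 -> f 0%N = 0 -> fcomp (fpinv g) f = fpinv (fcomp g f).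
Proof.
move=> g0 f0; symmetry; apply: fpinv_uniq; first by rewrite fcomp0.
by rewrite -fcompM // fpinvP // fcomp1.
Qed.

Lemma fpinv1 : fpinv (fone R) = fone R.
Proof. by apply: fpinv_uniq; rewrite ?fmul1 // /fone /= oner_eq0. Qed.

Lemma lin0 k a : a 0%N = 0 -> fadd (fone R) (fscale k a) 0%N != 0.
Proof. by move=> a0; rewrite /fadd /fscale a0 mulr0 addr0 /fone /= oner_eq0. Qed.

Lemma main (v : fps R) :
  let y := rapp (FS R) v in
  let z := rapp (LS R) v in
  let xc := xC R in
  rapp (rarr (fpinv (fadd (fone R) (fscale 2 xc))) xc) z
    = rapp (Dmat R) (rapp (rinv (FS R)) (rapp (Dmat R) y)) /\
  rapp (rarr (fpinv (fadd (fone R) (fscale (-4) (fmul xc xc)))) xc) z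
    = rapp (Dmat R) (rapp (rinv (LS R)) (rapp (Dmat R) y)) /\
  rapp (rarr (fadd (fone R) (fscale 2 xc)) xc) y
    = rapp (Dmat R) (rapp (rinv (FS R)) (rapp (Dmat R) z)) /\
  rapp (rarr (fmul (fadd (fone R) (fscale 2 xc))
             (fpinv (fadd (fone R) (fscale (-2) xc)))) xc) y
    = rapp (Dmat R) (rapp (rinv (LS R)) (rapp (Dmat R) z)).
Proof.
move=> y z xc.
have [t0 [ht htN]] := key.
have [c0 hc] := xCP.
rewrite /y /z /xc /rapp /rinv /Dmat /FS /LS /rarr /= -/PP -/NN.
set t := frev PP in t0 ht htN *.
set c := xC R in c0 hc htN *.
have P0 := PP0. have N0 := NN0.
have tN0 : fcomp t NN 0%N = 0 by rewrite fcomp0.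
have cN0 : fopp c 0%N = 0 by rewrite /fopp c0 oppr0.
have hNN : fcomp (fcomp NN t) NN = c.
  by rewrite fcompA // htN /NN fcompN // fcompX // foppK.
have hV : fcomp (fcomp (fcomp (fcomp v PP) NN) t) NN = fcomp v (fcomp PP c).
  rewrite fcompA // htN fcompA //.
  by rewrite /NN fcompN // fcompX // foppK fcompA.
have hV' : fcomp (fcomp v PP) c = fcomp v (fcomp PP c) by rewrite fcompA.
rewrite !fmul1 !fcomp1 // fpinv1 !fmul1.
rewrite !fcompM // hV hV'.
rewrite !fcompD // !fcompZ // !fcomp1 // !fcompX //.
rewrite hNN (fcomp_inv (lin0 2 t0) N0) fcompD // fcomp1 // fcompZ // htN.
set V := fcomp v (fcomp PP c).
have hA := fpinvP (lin0 2 c0).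
set A := fadd (fone R) (fscale 2 c) in hA *.
have cc0 : fmul c c 0%N = 0 by rewrite fmul0 c0 mul0r.
have hQ := fpinvP (lin0 (-4) cc0).
set Q := fadd (fone R) (fscale (-4) (fmul c c)) in hQ *.
have -> : fscale (-2) c = fscale 2 (fopp c).
  by apply: functional_extensionality => n; rewrite /fscale /fopp mulrN mulNr.
have hB : fpinv (fadd (fone R) (fscale 2 (fopp c))) = fmul (fpinv Q) A.
  apply: fpinv_uniq; first exact: lin0.
  transitivity (fmul Q (fpinv Q)); last exact: hQ.
  rewrite /Q /A !fscaleE fCN fC2 fC4; ring.
rewrite hB; split.
  transitivity (fmul (fmul A (fpinv A)) V); first by ring.
  by rewrite hA; ring.
split; first by ring.
split; first by [].
ring.
Qed.

End Aux.

Theorem theorem4p5 (R : realType) (v : fps R) :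
  let y := rapp (FS R) v in
  let z := rapp (LS R) v in
  let xc := xC R in
  (* (a) *)
  rapp (rarr (fpinv (fadd (fone R) (fscale 2 xc))) xc) z
    = rapp (Dmat R) (rapp (rinv (FS R)) (rapp (Dmat R) y)) /\
  (* (b) *)
  rapp (rarr (fpinv (fadd (fone R) (fscale (-4) (fmul xc xc)))) xc) z
    = rapp (Dmat R) (rapp (rinv (LS R)) (rapp (Dmat R) y)) /\
  (* (c) *)
  rapp (rarr (fadd (fone R) (fscale 2 xc)) xc) y
    = rapp (Dmat R) (rapp (rinv (FS R)) (rapp (Dmat R) z)) /\
  (* (d) *)
  rapp (rarr (fmul (fadd (fone R) (fscale 2 xc))
             (fpinv (fadd (fone R) (fscale (-2) xc)))) xc) y
    = rapp (Dmat R) (rapp (rinv (LS R)) (rapp (Dmat R) z)).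
Proof. exact: main. Qed.
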